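(* Let $C,C_1,C_2,C_3,C_4$ be circles with distinct centers $u,u_1,u_2,u_3,u_4$ such that, for each $i\in\{1,2,3,4\}$ (indices mod 4), the circles $C,C_i,C_{i+1}$ pass through a common point $P_i$, and let $\tilde P_i$ be the second intersection point of $C_i$ and $C_{i+1}$. Then $\tilde P_1,\dots,\tilde P_4$ lie on a circle $\tilde C$, and its center is the root $z=\tilde u$ different from $z=u$ of $$\frac{(u_2-z)(u_4-z)}{(u_1-z)(u_3-z)}=\frac{(u_2-u)(u_4-u)}{(u_1-u)(u_3-u)},$$ namely $$\tilde u=\frac{uu_1u_3-u_1u_2u_3-uu_2u_4+u_1u_2u_4-u_1u_3u_4+u_2u_3u_4}{uu_1-uu_2+uu_3-u_1u_3-uu_4+u_2u_4}.$$
   Context: All points are assumed in general position so that all the intersection points are distinct and the denominator is nonzero. *)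

(* Defs.v *)
(* the plane is modelled as a numeric closed field C
   (e.g. algC, or the complex numbers), points are elements of C. *)
From HB Require Import structures.
From mathcomp Require Import all_boot all_order all_algebra.
Set Implicit Arguments. Unset Strict Implicit. Unset Printing Implicit Defensive.
Import Order.TTheory GRing.Theory Num.Theory.
Local Open Scope ring_scope.

Definition on_circle (C : numClosedFieldType) (c : C) (r : C) (p : C) : Prop :=
  `|p - c| = r.

Definition tilde_center (C : numClosedFieldType) (u u1 u2 u3 u4 : C) : C :=
  (u*u1*u3 - u1*u2*u3 - u*u2*u4 + u1*u2*u4 - u1*u3*u4 + u2*u3*u4) /
  (u*u1 - u*u2 + u*u3 - u1*u3 - u*u4 + u2*u4).

(* Main.v *)
Require Import Defs.
From HB Require Import structures.
From mathcomp Require Import all_boot all_order all_algebra.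
From mathcomp Require Import ring.
Import Order.TTheory GRing.Theory Num.Theory.
Local Open Scope ring_scope.
Set Implicit Arguments.

Definition tc0 {F : fieldType} (u1 u2 u3 u4 : F) : F :=
  (- u1*u2*u3 + u1*u2*u4 - u1*u3*u4 + u2*u3*u4) / (- u1*u3 + u2*u4).

Lemma tc0_rot (F : fieldType) (v1 v2 v3 v4 : F) :
  tc0 v2 v3 v4 v1 = tc0 v1 v2 v3 v4.
Proof.
rewrite /tc0.
have -> : - v2 * v3 * v4 + v2 * v3 * v1 - v2 * v4 * v1 + v3 * v4 * v1
   = - (- v1*v2*v3 + v1*v2*v4 - v1*v3*v4 + v2*v3*v4) by ring.
have -> : - v2 * v4 + v3 * v1 = - (- v1*v3 + v2*v4) by ring.
by rewrite invrN mulrNN.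
Qed.

Lemma key_gen (F : fieldType) (v1 v2 v3 v4 p1 p2 p3 p4 s : F) :
  let c1 := s * v1 / (p4 * p1) in
  let c2 := s * v2 / (p1 * p2) in
  let c3 := s * v3 / (p2 * p3) in
  let c4 := s * v4 / (p3 * p4) in
  let t := tc0 v1 v2 v3 v4 in let tt := tc0 c1 c2 c3 c4 in
  let q1 := v1 + (s/p1 - c1) * (v2 - v1) / (c2 - c1) in
  let qc1 := c1 + (p1 - v1) * (c2 - c1) / (v2 - v1) in
  let q2 := v2 + (s/p2 - c2) * (v3 - v2) / (c3 - c2) in
  let qc2 := c2 + (p2 - v2) * (c3 - c2) / (v3 - v2) in
  s != 0 -> p1 != 0 -> p2 != 0 -> p3 != 0 -> p4 != 0 ->
  v2 - v1 != 0 -> v3 - v2 != 0 -> c2 - c1 != 0 -> c3 - c2 != 0 ->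
  - v1*v3 + v2*v4 != 0 ->
  (q1 - t) * (qc1 - tt) = (q2 - t) * (qc2 - tt).
Proof.
move=> c1 c2 c3 c4 t tt q1 qc1 q2 qc2 hs h1 h2 h3 h4 h21 h32 hc21 hc32 hd.
have e1 : - (s * v1) * (s * v3) + s * v2 * (s * v4) = s*s*(-v1*v3+v2*v4) by ring.
have e2 : s * v3 * p1 + - (s * v2) * p3 = (c3 - c2) * (p1 * p2 * p3).
  by rewrite /c3 /c2; field; rewrite ?h1 ?h2 ?h3.
have e3 : s * v2 * p4 + - (s * v1) * p2 = (c2 - c1) * (p4 * p1 * p2).
  by rewrite /c1 /c2; field; rewrite ?h1 ?h2 ?h4.
rewrite /q1 /qc1 /q2 /qc2 /t /tt /tc0 /c1 /c2 /c3 /c4.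
field.
by rewrite e1 e2 e3 h1 h2 h3 h4 hd h21 h32 !mulf_neq0.
Qed.

Lemma key (F : fieldType) (v1 v2 v3 v4 p1 p2 p3 p4 s c1 c2 c3 c4 pc1 pc2
   q1 qc1 q2 qc2 t tt : F) :
  c1 = s * v1 / (p4 * p1) -> c2 = s * v2 / (p1 * p2) ->
  c3 = s * v3 / (p2 * p3) -> c4 = s * v4 / (p3 * p4) ->
  pc1 = s / p1 -> pc2 = s / p2 ->
  t = tc0 v1 v2 v3 v4 -> tt = tc0 c1 c2 c3 c4 ->
  q1 = v1 + (pc1 - c1) * (v2 - v1) / (c2 - c1) ->
  qc1 = c1 + (p1 - v1) * (c2 - c1) / (v2 - v1) ->
  q2 = v2 + (pc2 - c2) * (v3 - v2) / (c3 - c2) ->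
  qc2 = c2 + (p2 - v2) * (c3 - c2) / (v3 - v2) ->
  s != 0 -> p1 != 0 -> p2 != 0 -> p3 != 0 -> p4 != 0 ->
  v2 - v1 != 0 -> v3 - v2 != 0 -> c2 - c1 != 0 -> c3 - c2 != 0 ->
  - v1*v3 + v2*v4 != 0 ->
  (q1 - t) * (qc1 - tt) = (q2 - t) * (qc2 - tt).
Proof.
move=> -> -> -> -> -> -> -> -> -> -> -> ->.
exact: key_gen.
Qed.

Lemma refl_lem (F : fieldType) (P Pc Q Qc a ac b bc k1 k2 : F) :
  (P - a) * (Pc - ac) = k1 -> (Q - a) * (Qc - ac) = k1 ->
  (P - b) * (Pc - bc) = k2 -> (Q - b) * (Qc - bc) = k2 ->
  P != Q -> b - a != 0 -> bc - ac != 0 ->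
  Q = a + (Pc - ac) * (b - a) / (bc - ac) /\
  Qc = ac + (P - a) * (bc - ac) / (b - a).
Proof.
move=> E1 E2 E3 E4 hPQ hab hc.
have H1 : Qc = Pc + (bc - ac) / (b - a) * (P - Q).
  apply/eqP; rewrite -subr_eq0.
  have : (b - a) * (Qc - (Pc + (bc - ac) / (b - a) * (P - Q))) = 0.
    transitivity (((Q - a) * (Qc - ac) - (P - a) * (Pc - ac))
                 - ((Q - b) * (Qc - bc) - (P - b) * (Pc - bc))).
      by field; rewrite ?hab.
    by rewrite E1 E2 E3 E4 !subrr.
  by move/eqP; rewrite mulf_eq0 (negbTE hab).
have hw : (bc - ac) / (b - a) != 0 by rewrite mulf_neq0 ?invr_eq0.
have : (Q - P) * ((Pc - ac) - (bc - ac) / (b - a) * (Q - a)) = 0.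
  transitivity ((Q - a) * (Qc - ac) - (P - a) * (Pc - ac)).
    by rewrite H1; field; rewrite ?hab.
  by rewrite E1 E2 subrr.
move/eqP; rewrite mulf_eq0 => /orP[|/eqP E].
  by rewrite subr_eq0 eq_sym (negbTE hPQ).
have E' : Pc - ac = (bc - ac) / (b - a) * (Q - a).
  by apply/eqP; rewrite -subr_eq0 E.
split; first by rewrite E'; field; rewrite ?hab ?hw ?hc.
have E'' : Pc = ac + (bc - ac) / (b - a) * (Q - a).
  by rewrite -E'; ring.
by rewrite H1 E''; field; rewrite ?hab.
Qed.

Lemma bis_lem (F : fieldType) (u uc x xc y yc w wc s k : F) :
  (x - u) * (xc - uc) = s -> (y - u) * (yc - uc) = s ->
  (x - w) * (xc - wc) = k -> (y - w) * (yc - wc) = k ->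
  x - u != 0 -> y - u != 0 -> x != y ->
  wc - uc = s * (w - u) / ((x - u) * (y - u)).
Proof.
move=> Ex Ey Ekx Eky hx hy hxy.
have Exc : xc = uc + s / (x - u) by rewrite -Ex; field; rewrite ?hx.
have Eyc : yc = uc + s / (y - u) by rewrite -Ey; field; rewrite ?hy.
have : (y - x) * ((wc - uc) - s * (w - u) / ((x - u) * (y - u))) = 0.
  transitivity ((x - w) * (xc - wc) - (y - w) * (yc - wc)).
    by rewrite Exc Eyc; field; rewrite ?hx ?hy.
  by rewrite Ekx Eky subrr.
move/eqP; rewrite mulf_eq0 => /orP[|/eqP E].
  by rewrite subr_eq0 eq_sym (negbTE hxy).
by apply/eqP; rewrite -subr_eq0 E.
Qed.

Arguments bis_lem {F u uc x xc y yc w wc s k}.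
Arguments refl_lem {F P Pc Q Qc a ac b bc k1 k2}.
Arguments key {F v1 v2 v3 v4 p1 p2 p3 p4 s c1 c2 c3 c4 pc1 pc2 q1 qc1 q2 qc2 t tt}.

Lemma uq (T : eqType) (x0 : T) (s : seq T) i j : uniq s ->
  (i < size s)%N -> (j < size s)%N -> i != j -> nth x0 s i != nth x0 s j.
Proof. by move=> U hi hj; rewrite nth_uniq. Qed.
Arguments uq {T} x0 {s} i j.

Section CC.
Variable C : numClosedFieldType.
Implicit Types u p c r : C.

Lemma circ c r p : on_circle c r p -> (p - c) * (p^* - c^*) = r ^+ 2.
Proof. by rewrite /on_circle -rmorphB -normCK => ->. Qed.

Lemma normeq (x y : C) : x * x^* = y * y^* -> `|x| = `|y|.
Proof.
by move=> E; apply/eqP; rewrite -(eqrXn2 (n:=2)) ?normr_ge0 // !normCK E.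
Qed.

Lemma tc_trans (u u1 u2 u3 u4 : C) :
  u*u1 - u*u2 + u*u3 - u1*u3 - u*u4 + u2*u4 != 0 ->
  tilde_center u u1 u2 u3 u4 - u = tc0 (u1 - u) (u2 - u) (u3 - u) (u4 - u).
Proof.
move=> hD.
have e : - (u1 - u) * (u3 - u) + (u2 - u) * (u4 - u) =
   u*u1 - u*u2 + u*u3 - u1*u3 - u*u4 + u2*u4 by ring.
by rewrite /tilde_center /tc0 e; field; exact: hD.
Qed.

Lemma tc_conj (u u1 u2 u3 u4 : C) :
  (tilde_center u u1 u2 u3 u4)^* = tilde_center u^* u1^* u2^* u3^* u4^*.
Proof. by rewrite /tilde_center fmorph_div !rmorphD !rmorphN !rmorphM. Qed.

End CC.

Unset Implicit Arguments.

Theorem mainTheorem10 (C : numClosedFieldType)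
  (u u1 u2 u3 u4 : C) (r r1 r2 r3 r4 : C)
  (P1 P2 P3 P4 Q1 Q2 Q3 Q4 : C) :
  (* distinct centers *)
  uniq [:: u; u1; u2; u3; u4] ->
  (* genuine circles: positive real radii *)
  0 < r -> 0 < r1 -> 0 < r2 -> 0 < r3 -> 0 < r4 ->
  (* C, C_i, C_{i+1} pass through the common point P_i (indices mod 4) *)
  on_circle u r P1 -> on_circle u1 r1 P1 -> on_circle u2 r2 P1 ->
  on_circle u r P2 -> on_circle u2 r2 P2 -> on_circle u3 r3 P2 ->
  on_circle u r P3 -> on_circle u3 r3 P3 -> on_circle u4 r4 P3 ->
  on_circle u r P4 -> on_circle u4 r4 P4 -> on_circle u1 r1 P4 ->
  (* Q_i (= tilde P_i) is an intersection point of C_i and C_{i+1} *)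
  on_circle u1 r1 Q1 -> on_circle u2 r2 Q1 ->
  on_circle u2 r2 Q2 -> on_circle u3 r3 Q2 ->
  on_circle u3 r3 Q3 -> on_circle u4 r4 Q3 ->
  on_circle u4 r4 Q4 -> on_circle u1 r1 Q4 ->
  (* general position: all these intersection points are distinct
     (in particular Q_i is the second intersection point, Q_i <> P_i) *)
  uniq [:: P1; P2; P3; P4; Q1; Q2; Q3; Q4] ->
  (* general position: nonzero denominator *)
  u*u1 - u*u2 + u*u3 - u1*u3 - u*u4 + u2*u4 != 0 ->
  let ut := tilde_center u u1 u2 u3 u4 in
  (* Q1..Q4 lie on a circle centered at ut *)
  (exists rt : C, [/\ on_circle ut rt Q1, on_circle ut rt Q2,
                      on_circle ut rt Q3 & on_circle ut rt Q4])
  /\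
  (* ut is a root of the (cleared) equation
     (u2-z)(u4-z)/((u1-z)(u3-z)) = (u2-u)(u4-u)/((u1-u)(u3-u)) *)
  (u2 - ut) * (u4 - ut) * ((u1 - u) * (u3 - u)) =
  (u2 - u) * (u4 - u) * ((u1 - ut) * (u3 - ut)).
Proof.
move=> Hu hr hr1 hr2 hr3 hr4 A1 B1 C1 A2 B2 C2 A3 B3 C3 A4 B4 C4
  QA1 QB1 QA2 QB2 QA3 QB3 QA4 QB4 HP hD ut.
split; last first.
  rewrite /ut /tilde_center; field; exact: hD.
have hs : r ^+ 2 != 0 by rewrite expf_neq0 // lt0r_neq0.
have pnz (P : C) : on_circle u r P -> P - u != 0.
  by move=> A; apply/eqP => E; move: hr; rewrite -A E normr0 ltxx.
have p1nz := pnz _ A1; have p2nz := pnz _ A2.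
have p3nz := pnz _ A3; have p4nz := pnz _ A4.
have d21 : u2 - u1 != 0 by rewrite subr_eq0 (uq 0 2 1 Hu).
have d32 : u3 - u2 != 0 by rewrite subr_eq0 (uq 0 3 2 Hu).
have d43 : u4 - u3 != 0 by rewrite subr_eq0 (uq 0 4 3 Hu).
have d14 : u1 - u4 != 0 by rewrite subr_eq0 (uq 0 1 4 Hu).
have cd (a b : C) : b - a != 0 -> b^* - a^* != 0.
  by move=> h; rewrite -rmorphB conjC_eq0.
have cd21 := cd _ _ d21; have cd32 := cd _ _ d32.
have cd43 := cd _ _ d43; have cd14 := cd _ _ d14.
have P41 : P4 != P1 by apply: (uq 0 3 0 HP).
have P12 : P1 != P2 by apply: (uq 0 0 1 HP).
have P23 : P2 != P3 by apply: (uq 0 1 2 HP).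
have P34 : P3 != P4 by apply: (uq 0 2 3 HP).
have PQ1 : P1 != Q1 by apply: (uq 0 0 4 HP).
have PQ2 : P2 != Q2 by apply: (uq 0 1 5 HP).
have PQ3 : P3 != Q3 by apply: (uq 0 2 6 HP).
have PQ4 : P4 != Q4 by apply: (uq 0 3 7 HP).
have Ec1 := bis_lem (circ A4) (circ A1) (circ C4) (circ B1) p4nz p1nz P41.
have Ec2 := bis_lem (circ A1) (circ A2) (circ C1) (circ B2) p1nz p2nz P12.
have Ec3 := bis_lem (circ A2) (circ A3) (circ C2) (circ B3) p2nz p3nz P23.
have Ec4 := bis_lem (circ A3) (circ A4) (circ C3) (circ B4) p3nz p4nz P34.
have Epc (P : C) : on_circle u r P -> P^* - u^* = r ^+ 2 / (P - u).
  move=> A; have nz := pnz _ A; rewrite -(circ A); field; exact: nz.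
have Epc1 := Epc _ A1; have Epc2 := Epc _ A2.
have Epc3 := Epc _ A3; have Epc4 := Epc _ A4.
have EQ1 := refl_lem (circ B1) (circ QA1) (circ C1) (circ QB1) PQ1 d21 cd21.
have EQ2 := refl_lem (circ B2) (circ QA2) (circ C2) (circ QB2) PQ2 d32 cd32.
have EQ3 := refl_lem (circ B3) (circ QA3) (circ C3) (circ QB3) PQ3 d43 cd43.
have EQ4 := refl_lem (circ B4) (circ QA4) (circ C4) (circ QB4) PQ4 d14 cd14.
have Eq (Q Qc a b P : C) :
  Q = a + (P^* - a^*) * (b - a) / (b^* - a^*) /\ Qc = a^* + (P - a) * (b^* - a^*) / (b - a) ->
  b - a != 0 ->
  Q - u = (a - u) + ((P^* - u^*) - (a^* - u^*)) * ((b - u) - (a - u))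
            / ((b^* - u^*) - (a^* - u^*)) /\
  Qc - u^* = (a^* - u^*) + ((P - u) - (a - u)) * ((b^* - u^*) - (a^* - u^*))
            / ((b - u) - (a - u)).
  move=> [-> ->] h1; have h2 := cd _ _ h1.
  have e1 : (b^* - u^*) - (a^* - u^*) = b^* - a^* by ring.
  have e2 : (b - u) - (a - u) = b - a by ring.
  have e3 : (P^* - u^*) - (a^* - u^*) = P^* - a^* by ring.
  have e4 : (P - u) - (a - u) = P - a by ring.
  by rewrite e1 e2 e3 e4; split; rewrite addrAC.
have [Eq1 Eqc1] := Eq _ _ _ _ _ EQ1 d21.
have [Eq2 Eqc2] := Eq _ _ _ _ _ EQ2 d32.
have [Eq3 Eqc3] := Eq _ _ _ _ _ EQ3 d43.
have [Eq4 Eqc4] := Eq _ _ _ _ _ EQ4 d14.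
have Et : ut - u = tc0 (u1 - u) (u2 - u) (u3 - u) (u4 - u) by exact: tc_trans.
have hDc : u^**u1^* - u^**u2^* + u^**u3^* - u1^**u3^* - u^**u4^* + u2^**u4^* != 0.
  by have := hD; rewrite -conjC_eq0 !rmorphD !rmorphN !rmorphM.
have Ett : ut^* - u^* = tc0 (u1^* - u^*) (u2^* - u^*) (u3^* - u^*) (u4^* - u^*).
  by rewrite /ut tc_conj; exact: tc_trans.
have Et2 : ut - u = tc0 (u2 - u) (u3 - u) (u4 - u) (u1 - u) by rewrite Et [RHS]tc0_rot.
have Ett2 : ut^* - u^* = tc0 (u2^* - u^*) (u3^* - u^*) (u4^* - u^*) (u1^* - u^*).
  by rewrite Ett [RHS]tc0_rot.
have Et3 : ut - u = tc0 (u3 - u) (u4 - u) (u1 - u) (u2 - u).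
  by rewrite Et [RHS]tc0_rot [RHS]tc0_rot.
have Ett3 : ut^* - u^* = tc0 (u3^* - u^*) (u4^* - u^*) (u1^* - u^*) (u2^* - u^*).
  by rewrite Ett [RHS]tc0_rot [RHS]tc0_rot.
have dd (a b : C) : b - a != 0 -> (b - u) - (a - u) != 0.
  by move=> h; rewrite (_ : _ - _ = b - a) //; ring.
have ddc (a b : C) : b - a != 0 -> (b^* - u^*) - (a^* - u^*) != 0.
  by move=> h; rewrite (_ : _ - _ = b^* - a^*) ?cd //; ring.
have hD1 : - (u1 - u) * (u3 - u) + (u2 - u) * (u4 - u) != 0.
  by rewrite (_ : _ + _ = u*u1 - u*u2 + u*u3 - u1*u3 - u*u4 + u2*u4) //; ring.
have hD2 : - (u2 - u) * (u4 - u) + (u3 - u) * (u1 - u) != 0.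
  by rewrite (_ : _ + _ = - (u*u1 - u*u2 + u*u3 - u1*u3 - u*u4 + u2*u4)) ?oppr_eq0 //; ring.
have hD3 : - (u3 - u) * (u1 - u) + (u4 - u) * (u2 - u) != 0.
  by rewrite (_ : _ + _ = u*u1 - u*u2 + u*u3 - u1*u3 - u*u4 + u2*u4) //; ring.
have K12 := key Ec1 Ec2 Ec3 Ec4 Epc1 Epc2 Et Ett Eq1 Eqc1 Eq2 Eqc2 hs p1nz p2nz
  p3nz p4nz (dd _ _ d21) (dd _ _ d32) (ddc _ _ d21) (ddc _ _ d32) hD1.
have K23 := key Ec2 Ec3 Ec4 Ec1 Epc2 Epc3 Et2 Ett2 Eq2 Eqc2 Eq3 Eqc3 hs p2nz p3nz
  p4nz p1nz (dd _ _ d32) (dd _ _ d43) (ddc _ _ d32) (ddc _ _ d43) hD2.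
have K34 := key Ec3 Ec4 Ec1 Ec2 Epc3 Epc4 Et3 Ett3 Eq3 Eqc3 Eq4 Eqc4 hs p3nz p4nz
  p1nz p2nz (dd _ _ d43) (dd _ _ d14) (ddc _ _ d43) (ddc _ _ d14) hD3.
have cB (x y : C) : (x - y)^* = x^* - y^* by rewrite rmorphB.
have L (Q : C) : (Q - ut) * (Q - ut)^* =
    ((Q - u) - (ut - u)) * ((Q^* - u^*) - (ut^* - u^*)).
  by rewrite cB; ring.
exists `|Q1 - ut|; split => //; rewrite /on_circle; apply: normeq.
- by rewrite !L K12.
- by rewrite !L K12 K23.
- by rewrite !L K12 K23 K34.
Qed.
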